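(* Let $\rho$ be a quantum state on a separable Hilbert space with spectrum $\{\lambda^{\rho}_i\}_{i=1}^{+\infty}$ arranged in non-increasing order. If $$\sum_{i=1}^{+\infty}\lambda^{\rho}_i \ln^2 i<+\infty,$$ then $\rho$ has the FA-property.
   Context: A state $\rho$ with spectrum $\{\lambda^{\rho}_i\}_{i=1}^{+\infty}$ (eigenvalues in non-increasing order, counting multiplicity, padded with zeros if the rank is finite) has the FA-property (finite-dimensional approximation property) if there exists a sequence $\{g_i\}_{i=1}^{+\infty}$ of nonnegative numbers such that $\sum_{i=1}^{+\infty}\lambda^{\rho}_i g_i<+\infty$ and $\lim_{\beta\to 0^+}\left[\sum_{i=1}^{+\infty}e^{-\beta g_i}\right]^{\beta}=1$. *)

(* Defs.v *)
From HB Require Import structures.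
From mathcomp Require Import all_boot all_order all_algebra.
From mathcomp Require Import all_classical all_reals all_analysis.
Set Implicit Arguments. Unset Strict Implicit. Unset Printing Implicit Defensive.
Import Order.TTheory GRing.Theory Num.Theory.
Import numFieldNormedType.Exports.
Local Open Scope classical_set_scope.
Local Open Scope ring_scope.
Local Open Scope ereal_scope.

(* The spectrum of a quantum state (density operator) on a separable Hilbert
   space: eigenvalues counted with multiplicity, in non-increasing order,
   padded with zeros.  Index shift: [lam i] is the paper's lambda_{i+1}. *)
Definition state_spectrum {R : realType} (lam : nat -> R) : Prop :=
  (forall i, (0 <= lam i)%R) /\
  (forall i, (lam i.+1 <= lam i)%R) /\
  \sum_(0 <= i <oo) (lam i)%:E = 1.

(* FA-property (index shift as above: g i is the paper's g_{i+1}). *)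
Definition FA_property {R : realType} (lam : nat -> R) : Prop :=
  exists g : nat -> R,
    (forall i, (0 <= g i)%R) /\
    \sum_(0 <= i <oo) (lam i * g i)%:E < +oo /\
    ((\sum_(0 <= i <oo) (expR (- (b * g i)))%:E) `^ b
       @[b --> (0:R)^'+] --> 1).

(* Main.v *)
Require Import Defs.
From HB Require Import structures.
From mathcomp Require Import all_boot all_order all_algebra.
From mathcomp Require Import all_classical all_reals all_analysis.
From mathcomp Require Import ring lra.
Import Order.TTheory GRing.Theory Num.Theory.
Import numFieldNormedType.Exports.
Local Open Scope classical_set_scope.
Local Open Scope ring_scope.
Local Open Scope ereal_scope.
Section S. Variable R : realType.
Local Open Scope ring_scope.

Lemma psum_bound0 (n : nat) :
  \sum_(0 <= i < n.+1) (((i.+1)%:R : R) ^+ 2)^-1 <= 2 - (n.+1%:R)^-1.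
Proof.
elim: n => [|n IH]; first by rewrite big_nat1 expr1n invr1; lra.
rewrite big_nat_recr //=.
set x : R := n.+1%:R.
have x0 : 0 < x by rewrite /x ltr0n.
have e1 : (n.+2%:R : R) = x + 1 by rewrite /x -natr1.
rewrite e1.
have key : ((x + 1) ^+ 2)^-1 <= x^-1 - (x+1)^-1.
  rewrite -subr_ge0.
  have -> : x^-1 - (x+1)^-1 - ((x+1)^+2)^-1 = (x * (x+1)^+2)^-1.
    field. apply/andP; split; rewrite gt_eqF //; lra.
  rewrite invr_ge0; apply: mulr_ge0; [lra | apply: exprn_ge0; lra].
rewrite -/x in IH. apply: le_trans (lerD IH key) _. rewrite addrA subrK. done.
Qed.

Lemma psum_bound (n : nat) :
  \sum_(0 <= i < n) (((i.+1)%:R : R) ^+ 2)^-1 <= 2.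
Proof.
case: n => [|n]; first by rewrite big_geq.
apply: le_trans (psum_bound0 n) _.
rewrite lerBlDr lerDl invr_ge0 ler0n //.
Qed.

Lemma series_le_bound (u : nat -> R) (M : R) :
  (forall i, 0 <= u i) -> (forall n, \sum_(0 <= i < n) u i <= M) ->
  (\sum_(0 <= i <oo) (u i)%:E <= M%:E)%E.
Proof.
move=> u0 HM; apply: lime_le.
  by apply: is_cvg_nneseries => i _ _; rewrite lee_fin.
by apply: nearW => n; rewrite sumEFin lee_fin.
Qed.

Lemma series_sq_bound (u : nat -> R) (K : R) :
  (forall i, 0 <= u i) -> (forall i, u i <= K / ((i.+1)%:R ^+ 2)) ->
  (\sum_(0 <= i <oo) (u i)%:E <= (2 * K)%:E)%E.
Proof.
move=> u0 uK; have K0 : 0 <= K.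
  by have := le_trans (u0 0%N) (uK 0%N); rewrite expr1n invr1 mulr1.
apply: series_le_bound => // n.
apply: le_trans (_ : \sum_(0 <= i < n) K * (((i.+1)%:R : R) ^+ 2)^-1 <= _).
  by apply: ler_sum => i _; exact: uK.
by rewrite -mulr_sumr mulrC ler_wpM2r // psum_bound.
Qed.
End S.
Section S2. Variable R : realType.
Local Open Scope ring_scope.

Lemma step_ineq (an x y : R) : 0 < x -> an <= x^+2 - y^+2 -> an * x^-1 <= 2*x - 2*y.
Proof.
move=> x0 H; rewrite ler_pdivrMr //.
have h2 : 0 <= (x - y) ^+ 2 := sqr_ge0 _.
nra.
Qed.

Lemma slow_growth (a : nat -> R) : (forall i, 0 <= a i) ->
  (\sum_(0 <= i <oo) (a i)%:E < +oo)%E ->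
  exists h : nat -> R, (forall i, 0 <= h i) /\
    (\sum_(0 <= i <oo) (a i * h i)%:E < +oo)%E /\
    (forall c, 0 < c -> \forall i \near \oo, c <= h i).
Proof.
move=> a0 Ha.
have cv := nnseries_is_cvg a0 Ha.
set A := limn (series a) in cv.
have SA n : series a n <= A.
  apply: nondecreasing_cvgn_le => //.
  by move=> p q pq; apply: (nondecreasing_series (u_ := a) (P := xpredT) (m := 0%N)).
pose r n := A - series a n + (n.+1%:R)^-1.
have r0 n : 0 < r n.
  by rewrite /r; apply: ltr_wpDl; [rewrite subr_ge0 | rewrite invr_gt0 ltr0n].
have rstep n : a n <= r n - r n.+1.
  rewrite /r seriesSr.
  have : (n.+2%:R : R)^-1 <= (n.+1%:R)^-1.
    by rewrite lef_pV2 ?posrE ?ltr0n // ler_nat.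
  move: (n.+1%:R^-1) (n.+2%:R^-1) (series a n) => p q s; lra.
have rcv : r n @[n --> \oo] --> 0.
  rewrite -(addr0 0); apply: cvgD; last exact: cvg_harmonic.
  rewrite -(subrr A); apply: cvgB => //; exact: cvg_cst.
pose h n := (Num.sqrt (r n))^-1.
exists h; split; first by move=> i; rewrite /h invr_ge0 sqrtr_ge0.
split.
  apply: (@le_lt_trans _ _ (2 * Num.sqrt (r 0%N))%:E); last exact: ltry.
  apply: series_le_bound => [i|n]; first by rewrite mulr_ge0 // /h invr_ge0 sqrtr_ge0.
  have tel : \sum_(0 <= i < n) a i * h i <= 2 * Num.sqrt (r 0%N) - 2 * Num.sqrt (r n).
    elim: n => [|n IH]; first by rewrite big_geq // subrr.
    rewrite big_nat_recr //=.
    have step : a n * h n <= 2 * Num.sqrt (r n) - 2 * Num.sqrt (r n.+1).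
      have x0 : 0 < Num.sqrt (r n) by rewrite sqrtr_gt0.
      have y0 : 0 <= Num.sqrt (r n.+1) by rewrite sqrtr_ge0.
      rewrite /h; apply: step_ineq => //.
      rewrite sqr_sqrtr; last exact: ltW.
      rewrite sqr_sqrtr; last exact: ltW.
      exact: rstep.
    lra.
  apply: le_trans tel _; rewrite lerBlDr lerDl mulr_ge0 // sqrtr_ge0.
move=> c c0.
move/cvgrPdist_lt : rcv => /(_ ((c^-1) ^+ 2)).
have : 0 < (c^-1) ^+ 2 by rewrite exprn_gt0 // invr_gt0.
move=> /[swap] /[apply]; apply: filterS => n.
rewrite sub0r normrN gtr0_norm // => rlt.
rewrite /h -(invrK c) lef_pV2 ?posrE ?invr_gt0 ?sqrtr_gt0 //.
have : Num.sqrt (r n) <= Num.sqrt ((c^-1)^+2) by rewrite ler_sqrt ?ltW // exprn_gt0 // invr_gt0.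
by rewrite sqrtr_sqr gtr0_norm // invr_gt0.
Qed.
End S2.
Section S3. Variable R : realType.
Local Open Scope ring_scope.

Lemma expR_ge1' (x : R) : 0 <= x -> 1 <= expR x.
Proof. move=> x0; apply: le_trans (expR_ge1Dx x); lra. Qed.

Lemma quad_ineq (k t : R) : 0 < k -> 2 * t - k * t ^+ 2 <= k^-1.
Proof.
move=> k0.
have e : k^-1 * (k * t - 1) ^+ 2 = k * t ^+ 2 - 2 * t + k^-1.
  by field; rewrite gt_eqF.
have : 0 <= k^-1 * (k * t - 1) ^+ 2 by rewrite mulr_ge0 ?invr_ge0 ?sqr_ge0 ?ltW.
rewrite e; move: (k^-1) => u; lra.
Qed.

Lemma term_bound (b c t hv : R) : 0 < b -> 0 < c -> c <= hv ->
  expR (- (b * (t ^+ 2 * hv))) <= expR ((b * c)^-1) * expR (- (2 * t)).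
Proof.
move=> b0 c0 chv; rewrite -expRD ler_expR.
have h1 : c * t ^+ 2 <= hv * t ^+ 2 by rewrite ler_wpM2r // sqr_ge0.
have h2 : b * (c * t ^+ 2) <= b * (hv * t ^+ 2) by rewrite ler_wpM2l // ltW.
have := @quad_ineq (b * c) t (mulr_gt0 b0 c0).
move: ((b * c)^-1) => u.
have -> : b * (t ^+ 2 * hv) = b * (hv * t ^+ 2) by rewrite (mulrC hv).
have -> : b * c * t ^+ 2 = b * (c * t ^+ 2) by rewrite mulrA.
lra.
Qed.

Lemma expR_ln2 (i : nat) : expR (- (2 * ln (i.+1%:R : R))) = ((i.+1%:R) ^+ 2)^-1.
Proof.
by rewrite expRN expRM_natl lnK // posrE ltr0n.
Qed.
End S3.
Theorem proposition2 (R : realType) (lam : nat -> R) :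
  state_spectrum lam ->
  \sum_(0 <= i <oo) (lam i * (ln (i.+1%:R)) ^+ 2)%:E < +oo ->
  FA_property lam.
Proof.
move=> [lam0 [_ _]] H.
pose a i := (lam i * (ln (i.+1%:R : R)) ^+ 2)%R.
have a0 i : (0 <= a i)%R by rewrite mulr_ge0 // sqr_ge0.
have [h [h0 [hsum hgrow]]] := @slow_growth R a a0 H.
pose g i := ((ln (i.+1%:R : R)) ^+ 2 * h i)%R.
have g0 i : (0 <= g i)%R by rewrite mulr_ge0 // sqr_ge0.
exists g; split => //; split.
  by rewrite (eq_eseriesr (g := fun i => (a i * h i)%:E)) // => i _; rewrite /g /a mulrA.
pose F (b : R) := \sum_(0 <= i <oo) (expR (- (b * g i))%R)%:E.
have F1 b : 1 <= F b.
  have := @nneseries_lim_ge R (fun i => (expR (- (b * g i))%R)%:E) xpredT 0%N 1%N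
    (fun i _ _ => expR_ge0 _).
  by rewrite big_nat1 /g ln1 expr0n /= mul0r mulr0 oppr0 expR0.
have F2 b c N : (0 < b)%R -> (0 < c)%R -> (forall i, (N <= i)%N -> (c <= h i)%R) ->
    F b <= (2 * (N.+1%:R ^+ 2 * expR ((b * c)^-1)))%:E.
  move=> b0 c0 hN; rewrite /F; apply: series_sq_bound => i; first exact: expR_ge0.
  have D0 : (0 < (i.+1%:R : R) ^+ 2)%R by rewrite exprn_gt0 // ltr0n.
  have E1 : (1 <= expR ((b * c)^-1))%R by apply: expR_ge1'; rewrite invr_ge0 mulr_ge0 // ltW.
  have N1 : (1 <= (N.+1%:R : R) ^+ 2)%R by rewrite exprn_ege1 // ler1n.
  case: (leqP N i) => Ni.
    rewrite /g; apply: le_trans (@term_bound R b c _ _ b0 c0 (hN _ Ni)) _.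
    rewrite expR_ln2; apply: ler_wpM2r; first by rewrite invr_ge0 ltW.
    by rewrite ler_peMl // ltW // expR_gt0.
  apply: (@le_trans _ _ 1%R).
    by rewrite expR_le1 oppr_le0 mulr_ge0 // ltW.
  rewrite ler_pdivlMr // mul1r.
  have iN : ((i.+1%:R : R) <= N.+1%:R)%R by rewrite ler_nat ltnS ltnW.
  have i0 : (0 <= (i.+1%:R : R))%R by rewrite ler0n.
  move: (expR _) E1 => E E1; move: (N.+1%:R : R) (i.+1%:R : R) iN i0 N1 => x y yx y0 x1.
  nra.
have Ffin b : (0 < b)%R -> F b \is a fin_num.
  move=> b0; case: (hgrow 1%R ltr01) => N _ HN.
  rewrite ge0_fin_numE; last by apply: le_trans (F1 b).
  exact: le_lt_trans (F2 b 1%R N b0 ltr01 HN) (ltry _).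
have key : (fun b => b * ln (fine (F b)))%R @ (0:R)^'+ --> 0%R.
  apply/cvgrPdist_lt => e e0.
  have c0 : (0 < 2 / e)%R by rewrite divr_gt0.
  case: (hgrow _ c0) => N _ HN.
  pose L := (ln (2:R) + 2 * ln (N.+1%:R : R))%R.
  have L0 : (0 <= L)%R.
    by rewrite addr_ge0 ?mulr_ge0 // ln_ge0 // ?ler1n //; lra.
  have d0 : (0 < e / 2 / (L + 1))%R by rewrite !divr_gt0 //; lra.
  near=> b.
  have b0 : (0 < b)%R by near: b; exact: nbhs_right_gt.
  have bd : (b < e / 2 / (L + 1))%R by near: b; exact: nbhs_right_lt.
  have Fs := fineK (Ffin b b0).
  have s1 : (1 <= fine (F b))%R by rewrite -lee_fin Fs.
  have sK := F2 b _ N b0 c0 HN.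
  move: (fine (F b)) Fs s1 => s Fs s1; rewrite -Fs lee_fin in sK.
  have s0 : (0 < s)%R by apply: lt_le_trans s1.
  have lns0 : (0 <= ln s)%R by exact: ln_ge0.
  have lnsK : (ln s <= L + (b * (2 / e))^-1)%R.
    have N0 : (0 < (N.+1%:R : R))%R by rewrite ltr0n.
    have N20 : (0 < (N.+1%:R : R) ^+ 2)%R by rewrite exprn_gt0.
    have E0 := expR_gt0 (b * (2 / e))^-1.
    apply: le_trans (_ : ln s <= ln (2 * ((N.+1%:R : R) ^+ 2 * expR (b * (2 / e))^-1)))%R _.
      by rewrite ler_ln // posrE // mulr_gt0 // mulr_gt0.
    rewrite lnM ?posrE ?mulr_gt0 // lnM ?posrE // lnXn // expRK /L -mulr_natl.
    lra.
  have bc : (b * (b * (2 / e))^-1 = e / 2)%R.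
    by field; apply/andP; split; rewrite gt_eqF.
  have bL : (b * (L + 1) < e / 2)%R.
    rewrite -ltr_pdivlMr //; lra.
  rewrite sub0r normrN ger0_norm; last by apply: mulr_ge0 => //; exact: ltW.
  have : (b * ln s <= b * (L + (b * (2 / e))^-1))%R by rewrite ler_wpM2l // ltW.
  rewrite mulrDr bc.
  move: (b * ln s)%R bL => X bL.
  have : (b * L <= b * (L + 1))%R by rewrite ler_wpM2l ?ltW //; lra.
  lra.
have Hs : (fun b => (expR (b * ln (fine (F b))))%:E) @ (0:R)^'+ --> 1%:E.
  apply: cvg_EFin; first exact: nearW.
  rewrite -expR0.
  exact: (@continuous_cvg _ _ _ _ _ (fun b => b * ln (fine (F b)))%R expR 0%R (@continuous_expR R 0%R) key).
apply: cvg_trans Hs.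
apply: near_eq_cvg; near=> b.
have b0 : (0 < b)%R by near: b; exact: nbhs_right_gt.
change ((expR (b * ln (fine (F b))))%:E = F b `^ b).
have Fs := fineK (Ffin b b0).
have s1 : (1 <= fine (F b))%R by rewrite -lee_fin Fs.
move: (fine (F b)) Fs s1 => s <- s1.
rewrite poweR_EFin /powR ifF //.
by apply/negbTE; rewrite gt_eqF // (lt_le_trans ltr01).
Unshelve. all: by end_near.
Qed.
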